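(* Let $N\ge 2$ and let $p$ be a star path of length $N$ with edge matrix $E$. Every line of reflective symmetry of the shape of $p$ is one of the candidate lines listed below, so the order of reflective symmetry satisfies $0\le O_{ref}\le N$. The candidate lines are: for $N$ even, the $N/2$ lines through a pair of opposite nodes $j$ and $j+N/2$ ($0\le j<N/2$) and the $N/2$ lines passing between the adjacent nodes $j,j+1$ and between the opposite adjacent nodes $j+N/2,\,j+N/2+1$ ($0\le j<N/2$); for $N$ odd, the $N$ lines each passing through exactly one node $j$ (and between the two nodes opposite to it). Moreover, a candidate line is a line of reflective symmetry if and only if: (i) $e_{1n}=-e_{2n}$ for each node $n$ intersected by the line, and (ii) the remaining columns form a negated palindrome with respect to the line, meaning that for every node $n$ not on the line, column $n'$ of $E$ equals the column obtained by negating both entries of column $n$ and re-sorting them in nondecreasing order, where $n'$ is the mirror image of $n$ across the line (i.e. $n'=(c-n)\bmod N$ with $c=2j$ for a line through node $j$ and $c=2j+1$ for a line between nodes $j$ and $j+1$).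
   Context: A path of length $N$ is a vector $p=(p_0,\dots,p_{N-1})$ whose entries are the integers $0,\dots,N-1$ in some order; indices are cyclic, $p_N=p_0$, $s_{-1}=s_{N-1}$; $x\bmod N$ denotes the remainder in $\{0,\dots,N-1\}$. Nodes $0,\dots,N-1$ are placed at equally spaced points clockwise around a circle; the shape of $p$ is the set of chords joining node $p_n$ to node $p_{n+1}$. A line of reflective symmetry is a line through the center of the circle such that reflection across it maps the shape onto itself; $O_{ref}$ is the number of such lines. The path differences are $d_n=p_{n+1}-p_n$, and the steps are $s_n=d_n$ if $|d_n|<N/2$; $s_n=N/2$ if $|d_n|=N/2$; $s_n=d_n-N$ if $d_n>N/2$; $s_n=d_n+N$ if $d_n<-N/2$. $p$ is a star path if $|s_n|\neq1$ for all $n$. The edge matrix $E=(e_{in})\in\mathbb{Z}^{2\times N}$: for node $n$ let $k$ be the index with $p_k=n$; take $s_k$ and $-s_{k-1}$, replace each by $0$ if its absolute value equals $N/2$, and let $e_{1n}\le e_{2n}$ be these two integers sorted in nondecreasing order. *)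

(* Defs.v *)
From Stdlib Require Import Reals Lra Lia ZArith Arith List.
Open Scope R_scope.

(* A path of length N: p : nat -> nat, whose first N values p 0,...,p (N-1)
   are the integers 0..N-1 in some order. Indices are taken cyclically via mod N. *)
Definition is_path (N : nat) (p : nat -> nat) : Prop :=
  (forall n, (n < N)%nat -> (p n < N)%nat) /\
  (forall m n, (m < N)%nat -> (n < N)%nat -> p m = p n -> m = n).

Definition nxt (N n : nat) : nat := ((n + 1) mod N)%nat.
Definition prv (N n : nat) : nat := ((n + N - 1) mod N)%nat.

Definition pdiff (N : nat) (p : nat -> nat) (n : nat) : Z :=
  (Z.of_nat (p (nxt N n)) - Z.of_nat (p n))%Z.

Definition step (N : nat) (p : nat -> nat) (n : nat) : Z :=
  let d := pdiff N p n in
  let NZ := Z.of_nat N in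
  if (2 * Z.abs d <? NZ)%Z then d
  else if (2 * Z.abs d =? NZ)%Z then (NZ / 2)%Z
  else if (d >? 0)%Z then (d - NZ)%Z
  else (d + NZ)%Z.

Definition star_path (N : nat) (p : nat -> nat) : Prop :=
  forall n, (n < N)%nat -> Z.abs (step N p n) <> 1%Z.

Definition pinv (N : nat) (p : nat -> nat) (m : nat) : nat :=
  match find (fun k => Nat.eqb (p k) m) (seq 0 N) with
  | Some k => k
  | None => 0%nat
  end.

Definition zero_half (N : nat) (x : Z) : Z :=
  if (2 * Z.abs x =? Z.of_nat N)%Z then 0%Z else x.

Definition edge_col (N : nat) (p : nat -> nat) (n : nat) : Z * Z :=
  let k := pinv N p n in
  let a := zero_half N (step N p k) in
  let b := zero_half N (- step N p (prv N k))%Z in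
  (Z.min a b, Z.max a b).

Definition e1 (N : nat) (p : nat -> nat) (n : nat) : Z := fst (edge_col N p n).
Definition e2 (N : nat) (p : nat -> nat) (n : nat) : Z := snd (edge_col N p n).

Definition neg_sort (c : Z * Z) : Z * Z :=
  (Z.min (- fst c) (- snd c), Z.max (- fst c) (- snd c))%Z.

Definition pt := (R * R)%type.

Definition node (N k : nat) : pt :=
  (cos (- (2 * PI * INR k / INR N)), sin (- (2 * PI * INR k / INR N))).

Definition chord (a b : pt) : pt -> Prop :=
  fun q => exists t, 0 <= t <= 1 /\
    q = ((1 - t) * fst a + t * fst b, (1 - t) * snd a + t * snd b).

Definition shape (N : nat) (p : nat -> nat) : (pt -> Prop) -> Prop :=
  fun C => exists n, (n < N)%nat /\ C = chord (node N (p n)) (node N (p (nxt N n))).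

Definition refl (th : R) (q : pt) : pt :=
  (cos (2 * th) * fst q + sin (2 * th) * snd q,
   sin (2 * th) * fst q - cos (2 * th) * snd q).

Definition refl_set (th : R) (C : pt -> Prop) : pt -> Prop :=
  fun q => exists x, C x /\ q = refl th x.

Definition sym_line (N : nat) (p : nat -> nat) (th : R) : Prop :=
  forall C, shape N p C <-> exists C', shape N p C' /\ C = refl_set th C'.

Definition same_line (th1 th2 : R) : Prop := exists k : Z, th1 = th2 + IZR k * PI.

Inductive cand : Type :=
  | Through (j : nat)
  | Between (j : nat).  (* line between nodes j and j+1 *)

Definition valid_cand (N : nat) (c : cand) : Prop :=
  match c with
  | Through j => if Nat.even N then (j < N / 2)%nat else (j < N)%nat
  | Between j => Nat.even N = true /\ (j < N / 2)%nat
  end.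

Definition cand_angle (N : nat) (c : cand) : R :=
  match c with
  | Through j => - (2 * PI * INR j / INR N)
  | Between j => - (PI * (2 * INR j + 1) / INR N)
  end.

Definition cand_const (c : cand) : Z :=
  match c with
  | Through j => (2 * Z.of_nat j)%Z
  | Between j => (2 * Z.of_nat j + 1)%Z
  end.

Definition mirror (N : nat) (c : cand) (n : nat) : nat :=
  Z.to_nat ((cand_const c - Z.of_nat n) mod Z.of_nat N)%Z.

Definition on_line (N : nat) (c : cand) (n : nat) : Prop :=
  match c with
  | Through j => n = j \/ (Nat.even N = true /\ n = (j + N / 2)%nat)
  | Between _ => False
  end.

Definition cond_i (N : nat) (p : nat -> nat) (c : cand) : Prop :=
  forall n, (n < N)%nat -> on_line N c n -> e1 N p n = (- e2 N p n)%Z.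

Definition cond_ii (N : nat) (p : nat -> nat) (c : cand) : Prop :=
  forall n, (n < N)%nat -> ~ on_line N c n ->
    edge_col N p (mirror N c n) = neg_sort (edge_col N p n).

Definition distinct_lines (l : list R) : Prop :=
  forall i j, (i < length l)%nat -> (j < length l)%nat -> i <> j ->
    ~ same_line (nth i l 0) (nth j l 0).

(* Main.v *)
Require Import Defs.
From Stdlib Require Import Reals ZArith Arith List Lra Lia Classical FunctionalExtensionality PropExtensionality.
Open Scope R_scope.

Ltac dbool := repeat match goal with
 | |- context [ (?a <=? ?b)%nat ] => destruct (Nat.leb_spec a b)
 | |- context [ (?a <? ?b)%nat ] => destruct (Nat.ltb_spec a b)
 | |- context [ (?a =? ?b)%nat ] => destruct (Nat.eqb_spec a b)
 | |- context [ (?a <? ?b)%Z ] => destruct (Z.ltb_spec a b)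
 | |- context [ (?a =? ?b)%Z ] => destruct (Z.eqb_spec a b)
 | |- context [ (?a >? ?b)%Z ] => destruct (Z.gtb_spec a b)
 | H: context [ (?a <=? ?b)%nat ] |- _ => destruct (Nat.leb_spec a b)
 | H: context [ (?a <? ?b)%nat ] |- _ => destruct (Nat.ltb_spec a b)
 | H: context [ (?a =? ?b)%nat ] |- _ => destruct (Nat.eqb_spec a b)
 | H: context [ (?a <? ?b)%Z ] |- _ => destruct (Z.ltb_spec a b)
 | H: context [ (?a =? ?b)%Z ] |- _ => destruct (Z.eqb_spec a b)
 | H: context [ (?a >? ?b)%Z ] |- _ => destruct (Z.gtb_spec a b)
 end.

Lemma half_spec N : (N = 2 * (N/2) + N mod 2 /\ N mod 2 < 2)%nat.
Proof. split. apply Nat.div_mod_eq. apply Nat.mod_upper_bound; lia. Qed.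

Lemma mod_eq (a b q N : nat) : (b < N)%nat -> a = (q*N + b)%nat -> a mod N = b.
Proof. intros. symmetry. apply (Nat.mod_unique a N q b); lia. Qed.

Lemma nxt_eq N n : (n < N)%nat -> nxt N n = if (n + 1 <? N)%nat then (n+1)%nat else 0%nat.
Proof. intros. unfold nxt. destruct (Nat.ltb_spec (n+1) N).
 - apply (mod_eq _ _ 0); lia.
 - apply (mod_eq _ _ 1); lia. Qed.

Lemma prv_eq N n : (n < N)%nat -> prv N n = if (n =? 0)%nat then (N-1)%nat else (n-1)%nat.
Proof. intros. unfold prv. destruct (Nat.eqb_spec n 0).
 - apply (mod_eq _ _ 0); lia.
 - apply (mod_eq _ _ 1); lia. Qed.

Lemma nxt_lt N n : (n < N)%nat -> (nxt N n < N)%nat.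
Proof. intros. rewrite nxt_eq; auto. dbool; lia. Qed.
Lemma prv_lt N n : (n < N)%nat -> (prv N n < N)%nat.
Proof. intros. rewrite prv_eq; auto. dbool; lia. Qed.
Lemma nxt_prv N n : (n < N)%nat -> nxt N (prv N n) = n.
Proof. intros. rewrite nxt_eq by (apply prv_lt; auto). rewrite prv_eq; auto. dbool; lia. Qed.
Lemma prv_nxt N n : (n < N)%nat -> prv N (nxt N n) = n.
Proof. intros. rewrite prv_eq by (apply nxt_lt; auto). rewrite nxt_eq; auto. dbool; lia. Qed.
Lemma nxt_neq N n : (2 <= N)%nat -> (n < N)%nat -> nxt N n <> n.
Proof. intros. rewrite nxt_eq; auto. dbool; lia. Qed.
Lemma prv_neq N n : (2 <= N)%nat -> (n < N)%nat -> prv N n <> n.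
Proof. intros. rewrite prv_eq; auto. dbool; lia. Qed.
Lemma nxt_prv_neq N n : (3 <= N)%nat -> (n < N)%nat -> nxt N n <> prv N n.
Proof. intros. rewrite nxt_eq, prv_eq; auto. dbool; lia. Qed.

Definition Rd (N m x : nat) : Z :=
  if (m <=? x)%nat then (Z.of_nat x - Z.of_nat m)%Z else (Z.of_nat x + Z.of_nat N - Z.of_nat m)%Z.
Definition ofs (N : nat) (r : Z) : Z :=
  if (2*r <? Z.of_nat N)%Z then r else if (2*r =? Z.of_nat N)%Z then 0%Z else (r - Z.of_nat N)%Z.
Definition oo N m x := ofs N (Rd N m x).

Lemma zh_neg N s : zero_half N (- s) = (- zero_half N s)%Z.
Proof. unfold zero_half. dbool; lia. Qed.

Lemma zh_step N p n : (1 < N)%nat -> (p n < N)%nat -> (p (nxt N n) < N)%nat ->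
  zero_half N (step N p n) = oo N (p n) (p (nxt N n)).
Proof. intros. unfold zero_half, step, pdiff, oo, Rd, ofs. dbool; Z.div_mod_to_equations; lia. Qed.

Lemma oo_antisym N m x : (m < N)%nat -> (x < N)%nat -> oo N x m = (- oo N m x)%Z.
Proof. intros. unfold oo, Rd, ofs. dbool; lia. Qed.

Lemma oo_inj N m x y : (m < N)%nat -> (x < N)%nat -> (y < N)%nat -> x <> m -> y <> m ->
  oo N m x = oo N m y -> x = y.
Proof. unfold oo, Rd, ofs. intros. dbool; lia. Qed.

Lemma zmod3 (z N : Z) : (0 < N)%Z -> (-N <= z < 2*N)%Z ->
  (z mod N = z + N \/ z mod N = z \/ z mod N = z - N)%Z.
Proof. intros. destruct (Z_lt_le_dec z 0); [left|destruct (Z_lt_le_dec z N); [right;left|right;right]];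
  symmetry.
  - apply (Z.mod_unique _ _ (-1)); lia.
  - apply (Z.mod_unique _ _ 0); lia.
  - apply (Z.mod_unique _ _ 1); lia. Qed.

Lemma cconst_bound N c : (0 < N)%nat -> valid_cand N c -> (0 <= cand_const c < 2 * Z.of_nat N)%Z.
Proof. intros. destruct c; unfold valid_cand, cand_const in *.
 - pose proof (half_spec N). destruct (Nat.even N); lia.
 - pose proof (half_spec N). destruct H0; lia. Qed.

Lemma mirror_spec N c x : (0 < N)%nat -> valid_cand N c -> (x < N)%nat ->
  (mirror N c x < N)%nat /\
  (Z.of_nat (mirror N c x) = cand_const c - Z.of_nat x + Z.of_nat N \/
   Z.of_nat (mirror N c x) = cand_const c - Z.of_nat x \/
   Z.of_nat (mirror N c x) = cand_const c - Z.of_nat x - Z.of_nat N)%Z.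
Proof. intros. pose proof (cconst_bound N c H H0).
  unfold mirror.
  assert (0 <= (cand_const c - Z.of_nat x) mod Z.of_nat N < Z.of_nat N)%Z by (apply Z.mod_pos_bound; lia).
  rewrite Z2Nat.id by lia. split. lia.
  apply zmod3; lia. Qed.

Lemma mirror_invol N c x : (0 < N)%nat -> valid_cand N c -> (x < N)%nat -> mirror N c (mirror N c x) = x.
Proof. intros. destruct (mirror_spec N c x) as [H2 H3]; auto.
  destruct (mirror_spec N c (mirror N c x)) as [H4 H5]; auto. lia. Qed.

Lemma mirror_inj N c x y : (0 < N)%nat -> valid_cand N c -> (x < N)%nat -> (y < N)%nat ->
  mirror N c x = mirror N c y -> x = y.
Proof. intros. destruct (mirror_spec N c x) as [H4 H5]; auto.
  destruct (mirror_spec N c y) as [H6 H7]; auto. lia. Qed.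

Lemma oo_mirror N c m x : (0 < N)%nat -> valid_cand N c -> (m < N)%nat -> (x < N)%nat ->
  oo N (mirror N c m) (mirror N c x) = oo N x m.
Proof. intros. destruct (mirror_spec N c x) as [H4 H5]; auto.
  destruct (mirror_spec N c m) as [H6 H7]; auto.
  unfold oo, Rd, ofs. dbool; lia. Qed.

Lemma on_line_fix N c n : (0 < N)%nat -> valid_cand N c -> (n < N)%nat -> on_line N c n -> mirror N c n = n.
Proof. intros. destruct (mirror_spec N c n) as [H4 H5]; auto.
  destruct c; unfold on_line, valid_cand, cand_const in *; [|contradiction].
  pose proof (half_spec N).
  destruct H2 as [->|[He ->]].
  - lia.
  - rewrite He in H0. apply Nat.even_spec in He. destruct He as [h ->].
    assert (E2 : (2*h/2 = h)%nat) by (rewrite Nat.mul_comm, Nat.div_mul; lia).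
    rewrite E2 in *. lia.
Qed.

Lemma path_surj N p : is_path N p -> forall m, (m < N)%nat -> exists k, (k < N)%nat /\ p k = m.
Proof.
 intros [Hr Hi] m Hm.
 assert (Hincl : incl (seq 0 N) (map p (seq 0 N))).
 { apply NoDup_length_incl.
   - apply NoDup_map_NoDup_ForallPairs; [|apply seq_NoDup].
     intros x y Hx Hy. apply in_seq in Hx, Hy. apply Hi; lia.
   - rewrite length_map; lia.
   - intros y Hy. apply in_map_iff in Hy. destruct Hy as [x [<- Hx]]. apply in_seq in Hx. apply in_seq. specialize (Hr x). lia. }
 assert (H : In m (seq 0 N)) by (apply in_seq; lia).
 apply Hincl, in_map_iff in H. destruct H as [k [Hk Hin]]. apply in_seq in Hin. exists k; split; [lia|auto].
Qed.

Lemma pinv_spec N p m : is_path N p -> (m < N)%nat -> (pinv N p m < N)%nat /\ p (pinv N p m) = m.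
Proof.
 intros HP Hm. unfold pinv. destruct (find _ _) eqn:E.
 - apply find_some in E. destruct E as [Hin Heq]. apply in_seq in Hin. apply Nat.eqb_eq in Heq. split; [lia|auto].
 - exfalso. destruct (path_surj N p HP m Hm) as [k [Hk Hpk]].
   pose proof (find_none _ _ E k) as F. rewrite Nat.eqb_neq in F. apply F; auto. apply in_seq; lia.
Qed.

Definition adj N p (u v : nat) : Prop := exists n, (n < N)%nat /\
  ((p n = u /\ p (nxt N n) = v) \/ (p n = v /\ p (nxt N n) = u)).

Lemma adj_sym N p u v : adj N p u v -> adj N p v u.
Proof. intros [n [Hn H]]. exists n. split; auto. tauto. Qed.

Lemma adj_props N p u v : (2 <= N)%nat -> is_path N p -> adj N p u v -> (u < N)%nat /\ (v < N)%nat /\ u <> v.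
Proof. intros H2 [Hr Hi] [n [Hn H]]. pose proof (nxt_lt N n Hn). pose proof (nxt_neq N n H2 Hn).
  assert (p n <> p (nxt N n)) by (intro E; apply Hi in E; auto; lia).
  pose proof (Hr n Hn). pose proof (Hr _ H0). destruct H as [[<- <-]|[<- <-]]; repeat split; auto. Qed.

Lemma adj_char N p m x : (2 <= N)%nat -> is_path N p -> (m < N)%nat ->
  (adj N p m x <-> x = p (nxt N (pinv N p m)) \/ x = p (prv N (pinv N p m))).
Proof.
  intros H2 HP Hm. destruct (pinv_spec N p m HP Hm) as [Hk Hpk].
  set (k := pinv N p m) in *. destruct HP as [Hr Hi]. split.
  - intros [n [Hn [[E1 E2]|[E1 E2]]]].
    + left. rewrite <- Hpk in E1. apply Hi in E1; auto. subst n. auto.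
    + right. rewrite <- Hpk in E2. apply Hi in E2; auto using nxt_lt.
      rewrite <- E2, prv_nxt; auto.
  - intros [E|E].
    + exists k. split; auto.
    + exists (prv N k). split; [apply prv_lt; auto|]. right. rewrite nxt_prv; auto.
Qed.

Lemma edge_formula N p m : (2 <= N)%nat -> is_path N p -> (m < N)%nat ->
  edge_col N p m = (Z.min (oo N m (p (nxt N (pinv N p m)))) (oo N m (p (prv N (pinv N p m)))),
                    Z.max (oo N m (p (nxt N (pinv N p m)))) (oo N m (p (prv N (pinv N p m))))).
Proof.
  intros H2 HP Hm. destruct (pinv_spec N p m HP Hm) as [Hk Hpk].
  unfold edge_col. set (k := pinv N p m) in *. pose proof HP as [Hr Hi].
  rewrite zh_step by (try lia; auto using nxt_lt).
  rewrite zh_neg, zh_step by (try lia; auto using nxt_lt, prv_lt).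
  rewrite nxt_prv by auto. rewrite Hpk.
  rewrite (oo_antisym N m (p (prv N k))) by (auto; apply Hr, prv_lt; auto). rewrite Z.opp_involutive. reflexivity.
Qed.

Definition pres N p c := forall u v, adj N p u v -> adj N p (mirror N c u) (mirror N c v).

Lemma nbr_facts N p m : (3 <= N)%nat -> is_path N p -> (m < N)%nat ->
  let a := p (nxt N (pinv N p m)) in let b := p (prv N (pinv N p m)) in
  (a < N)%nat /\ (b < N)%nat /\ a <> b /\ a <> m /\ b <> m.
Proof.
  intros H3 HP Hm. destruct (pinv_spec N p m HP Hm) as [Hk Hpk].
  simpl. set (k := pinv N p m) in *. destruct HP as [Hr Hi].
  pose proof (nxt_lt N k Hk). pose proof (prv_lt N k Hk).
  pose proof (nxt_neq N k ltac:(lia) Hk). pose proof (prv_neq N k ltac:(lia) Hk).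
  pose proof (nxt_prv_neq N k H3 Hk).
  repeat split; auto; intro E; try rewrite <- Hpk in E; apply Hi in E; auto.
Qed.

Lemma pres_G N p c : (3 <= N)%nat -> is_path N p -> valid_cand N c -> pres N p c ->
  forall n, (n < N)%nat -> edge_col N p (mirror N c n) = neg_sort (edge_col N p n).
Proof.
  intros H3 HP Hc Hp n Hn.
  destruct (mirror_spec N c n ltac:(lia) Hc Hn) as [Hsn _].
  pose proof (nbr_facts N p n H3 HP Hn) as [Ha [Hb [Hab [Han Hbn]]]].
  pose proof (nbr_facts N p _ H3 HP Hsn) as [Ha' [Hb' [Hab' [Han' Hbn']]]].
  rewrite (edge_formula N p n), (edge_formula N p (mirror N c n)) by (auto; lia).
  set (a := p (nxt N (pinv N p n))) in *. set (b := p (prv N (pinv N p n))) in *.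
  set (a' := p (nxt N (pinv N p (mirror N c n)))) in *.
  set (b' := p (prv N (pinv N p (mirror N c n)))) in *.
  assert (Aa : adj N p n a) by (apply adj_char; auto; lia).
  assert (Ab : adj N p n b) by (apply adj_char; auto; lia).
  apply Hp in Aa, Ab. apply adj_char in Aa, Ab; try lia; auto.
  fold a' b' in Aa, Ab.
  assert (mirror N c a <> mirror N c b) by (intro E; apply mirror_inj in E; auto; lia).
  assert (Ea : oo N (mirror N c n) (mirror N c a) = (- oo N n a)%Z)
    by (rewrite oo_mirror, oo_antisym; auto; lia).
  assert (Eb : oo N (mirror N c n) (mirror N c b) = (- oo N n b)%Z)
    by (rewrite oo_mirror, oo_antisym; auto; lia).
  unfold neg_sort; simpl.
  destruct Aa as [Aa|Aa]; destruct Ab as [Ab|Ab]; try congruence;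
    rewrite <- Aa, <- Ab, Ea, Eb; f_equal; lia.
Qed.

Lemma pres_iff_cond N p c : (3 <= N)%nat -> is_path N p -> valid_cand N c ->
  (pres N p c <-> cond_i N p c /\ cond_ii N p c).
Proof.
  intros H3 HP Hc. split.
  - intros Hp. split.
    + intros n Hn Hl. pose proof (pres_G N p c H3 HP Hc Hp n Hn) as G.
      rewrite on_line_fix in G by (auto; lia).
      unfold e1, e2. rewrite (edge_formula N p n) in * by (auto; lia).
      unfold neg_sort in G; simpl in *. injection G. lia.
    + intros n Hn _. apply pres_G; auto.
  - intros [Ci Cii] u v Huv.
    destruct (adj_props N p u v ltac:(lia) HP Huv) as [Hu [Hv Hne]].
    assert (G : edge_col N p (mirror N c u) = neg_sort (edge_col N p u)).
    { destruct (classic (on_line N c u)) as [Hl|Hl].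
      - rewrite on_line_fix by (auto; lia). specialize (Ci u Hu Hl). unfold e1, e2 in Ci.
        rewrite (edge_formula N p u) in * by (auto; lia). unfold neg_sort; simpl in *. f_equal; lia.
      - apply Cii; auto. }
    destruct (mirror_spec N c u ltac:(lia) Hc Hu) as [Hsu _].
    destruct (mirror_spec N c v ltac:(lia) Hc Hv) as [Hsv _].
    pose proof (nbr_facts N p u H3 HP Hu) as [Ha [Hb [Hab [Han Hbn]]]].
    pose proof (nbr_facts N p _ H3 HP Hsu) as [Ha' [Hb' [Hab' [Han' Hbn']]]].
    rewrite (edge_formula N p u), (edge_formula N p (mirror N c u)) in G by (auto; lia).
    set (a := p (nxt N (pinv N p u))) in *. set (b := p (prv N (pinv N p u))) in *.
    set (a' := p (nxt N (pinv N p (mirror N c u)))) in *.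
    set (b' := p (prv N (pinv N p (mirror N c u)))) in *.
    pose proof Huv as Hv2. apply adj_char in Hv2; auto; try lia. fold a b in Hv2.
    assert (Ev : oo N (mirror N c u) (mirror N c v) = (- oo N u v)%Z)
      by (rewrite oo_mirror, oo_antisym; auto; lia).
    assert (Hsne : mirror N c v <> mirror N c u) by (intro E; apply mirror_inj in E; auto; lia).
    unfold neg_sort in G; simpl in G. injection G as G1 G2.
    assert (oo N (mirror N c u) (mirror N c v) = oo N (mirror N c u) a' \/
            oo N (mirror N c u) (mirror N c v) = oo N (mirror N c u) b') by
      (destruct Hv2 as [-> | ->]; lia).
    apply adj_char; auto; try lia. fold a' b'.
    destruct H as [H|H]; apply oo_inj in H; auto.
Qed.

Lemma cos_perZ x z : cos (x + 2 * IZR z * PI) = cos x.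
Proof.
  assert (S : sin (2 * IZR z * PI) = 0) by (apply sin_eq_0_1; exists (2*z)%Z; rewrite mult_IZR; ring).
  assert (S1 : sin (IZR z * PI) = 0) by (apply sin_eq_0_1; exists z; ring).
  assert (C : cos (2 * IZR z * PI) = 1).
  { replace (2 * IZR z * PI) with (2 * (IZR z * PI)) by ring. rewrite cos_2a_sin, S1. ring. }
  rewrite cos_plus, S, C. ring.
Qed.

Lemma sin_perZ x z : sin (x + 2 * IZR z * PI) = sin x.
Proof.
  assert (S : sin (2 * IZR z * PI) = 0) by (apply sin_eq_0_1; exists (2*z)%Z; rewrite mult_IZR; ring).
  assert (S1 : sin (IZR z * PI) = 0) by (apply sin_eq_0_1; exists z; ring).
  assert (C : cos (2 * IZR z * PI) = 1).
  { replace (2 * IZR z * PI) with (2 * (IZR z * PI)) by ring. rewrite cos_2a_sin, S1. ring. }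
  rewrite sin_plus, S, C. ring.
Qed.

Lemma trig_eq x y : cos x = cos y -> sin x = sin y -> exists z : Z, x = y + 2 * IZR z * PI.
Proof.
  intros Hc Hs.
  assert (C1 : cos (x - y) = 1).
  { rewrite cos_minus, Hc, Hs. pose proof (sin2_cos2 y). unfold Rsqr in H. lra. }
  assert (S0 : sin ((x - y) / 2) = 0).
  { replace (x - y) with (2 * ((x - y)/2)) in C1 by field. rewrite cos_2a_sin in C1.
    assert (sin ((x-y)/2) * sin ((x-y)/2) = 0) by lra.
    apply Rmult_integral in H. destruct H; auto. }
  apply sin_eq_0_0 in S0. destruct S0 as [k Hk]. exists k. lra.
Qed.

Definition unit (q : pt) := fst q * fst q + snd q * snd q = 1.

Lemma node_unit N k : unit (node N k).
Proof. unfold unit, node; simpl. pose proof (sin2_cos2 (- (2 * PI * INR k / INR N))). unfold Rsqr in H. lra. Qed.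

Lemma refl_unit th q : unit q -> unit (refl th q).
Proof. unfold unit, refl; destruct q as [x y]; simpl. intros H.
  pose proof (sin2_cos2 (2*th)). unfold Rsqr in H0.
  replace ((cos (2 * th) * x + sin (2 * th) * y) * (cos (2 * th) * x + sin (2 * th) * y) +
    (sin (2 * th) * x - cos (2 * th) * y) * (sin (2 * th) * x - cos (2 * th) * y))
  with ((sin (2 * th) * sin (2 * th) + cos (2 * th) * cos (2 * th)) * (x*x+y*y)) by ring.
  rewrite H0, H. ring. Qed.

Lemma convex_end a b q : unit a -> unit b -> unit q -> chord a b q -> q = a \/ q = b.
Proof.
  destruct a as [a1 a2], b as [b1 b2]. unfold unit, chord; simpl.
  intros Ha Hb Hq [t [Ht ->]]. simpl in Hq.
  assert (E : t * (1 - t) * (1 - (a1*b1 + a2*b2)) = 0).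
  { assert (I : ((1 - t) * a1 + t * b1) * ((1 - t) * a1 + t * b1) +
     ((1 - t) * a2 + t * b2) * ((1 - t) * a2 + t * b2) - 1 =
     -2 * (t * (1 - t) * (1 - (a1*b1 + a2*b2))) + (1-t)*(1-t)*(a1*a1+a2*a2-1) + t*t*(b1*b1+b2*b2-1)) by ring.
    rewrite Hq, Ha, Hb in I. lra. }
  apply Rmult_integral in E. destruct E as [E|E].
  - apply Rmult_integral in E. destruct E as [E|E].
    + left. subst t. f_equal; ring.
    + right. assert (t = 1) by lra. subst t. f_equal; ring.
  - assert (D : (a1 - b1)*(a1-b1) + (a2-b2)*(a2-b2) = (a1*a1+a2*a2) + (b1*b1+b2*b2) - 2*(a1*b1+a2*b2)) by ring.
    rewrite Ha, Hb in D. replace (a1*b1+a2*b2) with 1 in D by lra.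
    pose proof (Rle_0_sqr (a1-b1)). pose proof (Rle_0_sqr (a2-b2)). unfold Rsqr in *.
    assert (a1 = b1) by nra. assert (a2 = b2) by nra. subst. left. f_equal; ring.
Qed.

Lemma INRnz N : (0 < N)%nat -> INR N <> 0.
Proof. intros. apply not_0_INR. lia. Qed.

Lemma node_inj N a b : (0 < N)%nat -> (a < N)%nat -> (b < N)%nat -> node N a = node N b -> a = b.
Proof.
  intros HN Ha Hb E. unfold node in E. injection E as Ec Es.
  destruct (trig_eq _ _ Ec Es) as [z Hz].
  pose proof (INRnz N HN). pose proof PI_RGT_0.
  assert (E2 : 2*PI*(INR b - INR a) = 2*PI*(IZR z * INR N)).
  { replace (2*PI*(INR b - INR a)) with (INR N * (-(2*PI*INR a/INR N) - -(2*PI*INR b/INR N))) by (field; auto).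
    rewrite Hz. field; auto. }
  apply Rmult_eq_reg_l in E2; [|lra].
  rewrite !INR_IZR_INZ, <- minus_IZR, <- mult_IZR in E2. apply eq_IZR in E2.
  assert (z = 0%Z).
  { destruct (Z.lt_trichotomy z 0) as [Z1|[Z1|Z1]]; auto.
    - assert (z * Z.of_nat N <= - Z.of_nat N)%Z by nia. lia.
    - assert (z * Z.of_nat N >= Z.of_nat N)%Z by nia. lia. }
  subst z. lia.
Qed.

Lemma chord_sym a b : chord a b = chord b a.
Proof.
  apply functional_extensionality; intro q. apply propositional_extensionality.
  unfold chord; split; intros [t [Ht ->]]; exists (1 - t); split; try lra; f_equal; ring.
Qed.

Lemma refl_chord th a b : refl_set th (chord a b) = chord (refl th a) (refl th b).
Proof.
  apply functional_extensionality; intro q. apply propositional_extensionality.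
  unfold refl_set, chord, refl; split.
  - intros [x [[t [Ht ->]] ->]]. exists t. split; auto. simpl. f_equal; ring.
  - intros [t [Ht ->]]. eexists. split. exists t. split; [exact Ht|reflexivity]. simpl. f_equal; ring.
Qed.

Lemma angle2 N c : (0 < N)%nat -> 2 * cand_angle N c = - (2 * PI * IZR (cand_const c) / INR N).
Proof. intros. pose proof (INRnz N H). destruct c; unfold cand_angle, cand_const.
  - rewrite mult_IZR, <- INR_IZR_INZ. field; auto.
  - rewrite plus_IZR, mult_IZR, <- INR_IZR_INZ. field; auto.
Qed.

Lemma refl_node N c k : (0 < N)%nat -> valid_cand N c -> (k < N)%nat ->
  refl (cand_angle N c) (node N k) = node N (mirror N c k).
Proof.
  intros HN Hc Hk. destruct (mirror_spec N c k HN Hc Hk) as [_ Hm].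
  assert (Hq : exists q : Z, Z.of_nat (mirror N c k) = (cand_const c - Z.of_nat k + q * Z.of_nat N)%Z).
  { destruct Hm as [H|[H|H]]; [exists 1%Z|exists 0%Z|exists (-1)%Z]; lia. }
  destruct Hq as [q Hq].
  unfold refl, node; simpl. rewrite angle2 by auto.
  pose proof (INRnz N HN).
  set (A := - (2 * PI * IZR (cand_const c) / INR N)).
  set (phi := - (2 * PI * INR k / INR N)).
  assert (E : - (2 * PI * INR (mirror N c k) / INR N) = (A - phi) + 2 * IZR (-q) * PI).
  { rewrite (INR_IZR_INZ (mirror N c k)), Hq. rewrite plus_IZR, minus_IZR, mult_IZR, opp_IZR.
    rewrite <- !INR_IZR_INZ. unfold A, phi. field; auto. }
  rewrite E, cos_perZ, sin_perZ, cos_minus, sin_minus. reflexivity.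
Qed.

Definition Ch N u v := chord (node N u) (node N v).

Lemma shape_iff N p C : shape N p C <-> exists u v, adj N p u v /\ C = Ch N u v.
Proof.
  split.
  - intros [n [Hn ->]]. exists (p n), (p (nxt N n)). split; [|reflexivity]. exists n. auto.
  - intros [u [v [[n [Hn [[<- <-]|[<- <-]]]] ->]]]; exists n; split; auto. unfold Ch. apply chord_sym.
Qed.

Lemma in_ch N u v : Ch N u v (node N u) /\ Ch N u v (node N v).
Proof. unfold Ch, chord. split; [exists 0|exists 1]; (split; [lra|]); destruct (node N u), (node N v); simpl; f_equal; ring. Qed.

Lemma ch_eq_adj N p u v a b : (2 <= N)%nat -> is_path N p -> (u < N)%nat -> (v < N)%nat -> u <> v ->
  adj N p a b -> Ch N u v = Ch N a b -> adj N p u v.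
Proof.
  intros H2 HP Hu Hv Hne Hab E.
  destruct (adj_props N p a b H2 HP Hab) as [Ha [Hb _]].
  assert (Pu : u = a \/ u = b).
  { destruct (in_ch N u v) as [I _]. rewrite E in I. apply convex_end in I; try apply node_unit.
    destruct I as [I|I]; apply node_inj in I; auto; lia. }
  assert (Pv : v = a \/ v = b).
  { destruct (in_ch N u v) as [_ I]. rewrite E in I. apply convex_end in I; try apply node_unit.
    destruct I as [I|I]; apply node_inj in I; auto; lia. }
  destruct Pu as [ -> | -> ]; destruct Pv as [ -> | -> ]; try contradiction; auto using adj_sym.
Qed.

Lemma refl_Ch N c u v : (0 < N)%nat -> valid_cand N c -> (u < N)%nat -> (v < N)%nat ->
  refl_set (cand_angle N c) (Ch N u v) = Ch N (mirror N c u) (mirror N c v).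
Proof. intros. unfold Ch. rewrite refl_chord, !refl_node; auto. Qed.

Lemma sym_iff_pres N p c : (2 <= N)%nat -> is_path N p -> valid_cand N c ->
  (sym_line N p (cand_angle N c) <-> pres N p c).
Proof.
  intros H2 HP Hc. split.
  - intros S u v Huv.
    destruct (adj_props N p u v H2 HP Huv) as [Hu [Hv Hne]].
    destruct (mirror_spec N c u ltac:(lia) Hc Hu) as [Hsu _].
    destruct (mirror_spec N c v ltac:(lia) Hc Hv) as [Hsv _].
    assert (Sh : shape N p (Ch N (mirror N c u) (mirror N c v))).
    { apply S. exists (Ch N u v). split.
      - apply shape_iff. eauto.
      - rewrite refl_Ch; auto; lia. }
    apply shape_iff in Sh. destruct Sh as [a [b [Hab E]]].
    apply (ch_eq_adj N p _ _ a b); auto.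
    intro E2. apply mirror_inj in E2; auto; lia.
  - intros Hp C. split.
    + intros Sh. apply shape_iff in Sh. destruct Sh as [u [v [Huv ->]]].
      destruct (adj_props N p u v H2 HP Huv) as [Hu [Hv Hne]].
      destruct (mirror_spec N c u ltac:(lia) Hc Hu) as [Hsu _].
      destruct (mirror_spec N c v ltac:(lia) Hc Hv) as [Hsv _].
      exists (Ch N (mirror N c u) (mirror N c v)). split.
      * apply shape_iff. exists (mirror N c u), (mirror N c v). split; auto.
      * rewrite refl_Ch, !mirror_invol; auto; lia.
    + intros [C' [Sh ->]]. apply shape_iff in Sh. destruct Sh as [u [v [Huv ->]]].
      destruct (adj_props N p u v H2 HP Huv) as [Hu [Hv Hne]].
      rewrite refl_Ch by (auto; lia). apply shape_iff. exists (mirror N c u), (mirror N c v). split; auto.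
Qed.

Lemma N_ge3 N p : (2 <= N)%nat -> is_path N p -> star_path N p -> (3 <= N)%nat.
Proof.
  intros H2 [Hr Hi] S. destruct (Nat.eq_dec N 2) as [->|]; [|lia]. exfalso.
  specialize (S 0%nat ltac:(lia)). unfold step, pdiff in S.
  replace (nxt 2 0) with 1%nat in S by reflexivity.
  pose proof (Hr 0%nat ltac:(lia)). pose proof (Hr 1%nat ltac:(lia)).
  assert (p 0%nat <> p 1%nat) by (intro E; apply Hi in E; lia).
  dbool; Z.div_mod_to_equations; lia.
Qed.

Lemma node0 N : (0 < N)%nat -> node N 0 = (1, 0).
Proof. intros. pose proof (INRnz N H). unfold node. replace (- (2 * PI * INR 0 / INR N)) with 0.
  rewrite cos_0, sin_0; reflexivity. simpl. field; auto. Qed.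

Lemma part1 N p th : (3 <= N)%nat -> is_path N p -> sym_line N p th ->
  exists c, valid_cand N c /\ same_line th (cand_angle N c).
Proof.
  intros H3 HP S.
  destruct (path_surj N p HP 0%nat ltac:(lia)) as [n [Hn Hpn]].
  assert (Sh0 : shape N p (Ch N (p n) (p (nxt N n)))) by (apply shape_iff; do 2 eexists; split; [exists n; split; [exact Hn| left; auto]|reflexivity]).
  assert (Sh1 : shape N p (refl_set th (Ch N (p n) (p (nxt N n))))) by (apply S; eauto).
  apply shape_iff in Sh1. destruct Sh1 as [a [b [Hab E]]].
  destruct (adj_props N p a b ltac:(lia) HP Hab) as [Ha [Hb _]].
  assert (I : Ch N a b (refl th (node N 0))).
  { rewrite <- E. exists (node N 0). split; auto. rewrite <- Hpn. apply in_ch. }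
  apply convex_end in I; try apply node_unit; [|apply refl_unit, node_unit].
  assert (Hm : exists m, (m < N)%nat /\ refl th (node N 0) = node N m) by (destruct I; eauto).
  clear I. destruct Hm as [m [Hm I]].
  rewrite node0 in I by lia. unfold refl, node in I; simpl in I. injection I as Ic Is.
  replace (cos (2 * th) * 1 + sin (2 * th) * 0) with (cos (2*th)) in Ic by ring.
  replace (sin (2 * th) * 1 - cos (2 * th) * 0) with (sin (2*th)) in Is by ring.
  destruct (trig_eq _ _ Ic Is) as [z Hz].
  pose proof (INRnz N ltac:(lia)) as HN0.
  assert (Hth : th = (2 * th) / 2) by field. rewrite Hz in Hth.
  destruct (Nat.Even_or_Odd m) as [[j Hj]|[j Hj]]; subst m;
  destruct (Nat.even N) eqn:EN.
  - exists (Through j). split.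
    + unfold valid_cand. rewrite EN. apply Nat.even_spec in EN. destruct EN as [h ->].
      rewrite Nat.mul_comm, Nat.div_mul; lia.
    + exists z. rewrite Hth. unfold cand_angle. rewrite mult_INR. simpl (INR 2). field; auto.
  - exists (Through j). split.
    + unfold valid_cand. rewrite EN. lia.
    + exists z. rewrite Hth. unfold cand_angle. rewrite mult_INR. simpl (INR 2). field; auto.
  - exists (Between j). split.
    + unfold valid_cand. split; auto. apply Nat.even_spec in EN. destruct EN as [h ->].
      rewrite Nat.mul_comm, Nat.div_mul; lia.
    + exists z. rewrite Hth. unfold cand_angle. rewrite plus_INR, mult_INR. simpl (INR 2). simpl (INR 1). field; auto.
  - assert (HO : Nat.Odd N) by (apply Nat.odd_spec; unfold Nat.odd; rewrite EN; reflexivity).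
    destruct HO as [h Hh].
    exists (Through (j + h + 1)). split.
    + unfold valid_cand. rewrite EN. lia.
    + exists (z + 1)%Z. rewrite Hth. unfold cand_angle. rewrite plus_IZR.
      assert (INR N = 2 * INR h + 1) by (rewrite Hh, plus_INR, mult_INR; reflexivity).
      rewrite !plus_INR, !mult_INR. simpl (INR 2). simpl (INR 1). rewrite H.
      rewrite H in HN0. field; auto.
Qed.

Definition code N c := match c with Through j => j | Between j => (N / 2 + j)%nat end.

Lemma code_lt N c : valid_cand N c -> (code N c < N)%nat.
Proof. pose proof (half_spec N). destruct c; unfold valid_cand, code.
  - destruct (Nat.even N); lia.
  - intros [E Hj]. apply Nat.even_spec in E. destruct E as [h ->].
    rewrite Nat.mul_comm, Nat.div_mul in *; lia.
Qed.

Lemma code_inj N c1 c2 : valid_cand N c1 -> valid_cand N c2 -> code N c1 = code N c2 -> c1 = c2.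
Proof. destruct c1, c2; unfold valid_cand, code; intros.
  - subst; auto.
  - destruct H0 as [E _]. rewrite E in H. lia.
  - destruct H as [E _]. rewrite E in H0. lia.
  - f_equal; lia.
Qed.

Lemma same_line_trans a b t : same_line a t -> same_line b t -> same_line a b.
Proof. intros [k1 H1] [k2 H2]. exists (k1 - k2)%Z. rewrite minus_IZR. subst. ring. Qed.

Lemma build N p l : (forall th, sym_line N p th -> exists c, valid_cand N c /\ same_line th (cand_angle N c)) ->
  Forall (sym_line N p) l -> exists L, length L = length l /\
  forall i, (i < length l)%nat -> exists c, valid_cand N c /\ code N c = nth i L 0%nat /\
     same_line (nth i l 0) (cand_angle N c).
Proof.
  intros P F. induction F as [|a l Ha F IH].
  - exists nil. split; auto. simpl. intros; lia.
  - destruct IH as [L [HL HI]]. destruct (P a Ha) as [c [Hc Hs]].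
    exists (code N c :: L). split; [simpl; auto|].
    intros [|i] Hi; simpl.
    + eauto.
    + apply HI. simpl in Hi. lia.
Qed.

Theorem mainTheorem7 (N : nat) (p : nat -> nat) :
  (2 <= N)%nat -> is_path N p -> star_path N p ->
  (forall th, sym_line N p th ->
     exists c, valid_cand N c /\ same_line th (cand_angle N c)) /\
  (forall l : list R, distinct_lines l -> Forall (sym_line N p) l ->
     (length l <= N)%nat) /\
  (forall c, valid_cand N c ->
     (sym_line N p (cand_angle N c) <-> cond_i N p c /\ cond_ii N p c)).
Proof.
  intros H2 HP HS. pose proof (N_ge3 N p H2 HP HS) as H3.
  assert (P1 : forall th, sym_line N p th -> exists c, valid_cand N c /\ same_line th (cand_angle N c))
    by (intros; apply (part1 N p); auto).
  split; [exact P1|split].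
  - intros l D F. destruct (build N p l P1 F) as [L [HL HI]].
    rewrite <- HL. change (length L) with (length L). 
    rewrite <- (length_seq N 0).
    apply NoDup_incl_length.
    + apply (NoDup_nth L 0%nat). intros i j Hi Hj E.
      destruct (Nat.eq_dec i j) as [|Hne]; auto. exfalso.
      rewrite HL in Hi, Hj.
      destruct (HI i Hi) as [ci [Hci [Eci Si]]]. destruct (HI j Hj) as [cj [Hcj [Ecj Sj]]].
      assert (ci = cj) by (apply (code_inj N); auto; congruence). subst cj.
      apply (D i j Hi Hj Hne). eapply same_line_trans; eauto.
    + intros x Hx. apply (In_nth L x 0%nat) in Hx. destruct Hx as [i [Hi <-]].
      rewrite HL in Hi. destruct (HI i Hi) as [c [Hc [Ec _]]]. rewrite <- Ec.
      apply in_seq. pose proof (code_lt N c Hc). lia.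
  - intros c Hc. rewrite sym_iff_pres by (auto; lia). apply pres_iff_cond; auto.
Qed.
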